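(* Let $s\ge1$, $\varepsilon\ge0$, let $p,p'$ be Borel probability measures on $\mathbb R^n$ with finite $s$-th moments, let $Q$ be a finite partition of $\mathbb R^n$ into Borel sets, and define $\gamma,\gamma'\in\mathcal D(Q)$ by $\gamma(q):=p(q)$, $\gamma'(q):=p'(q)$. If $\mathcal W_s(p,p')\le\varepsilon$, then $\mathcal T_c(\gamma,\gamma')\le\varepsilon^s$.
   Context: $\mathcal W_s$ is the $s$-Wasserstein distance on $\mathbb R^n$ with respect to the Euclidean norm $\|\cdot\|$: $\mathcal W_s(p,p')^s=\inf_\pi\int\|x-y\|^s\,d\pi(x,y)$ over couplings $\pi$ of $p,p'$. For $q,q'\in Q$, $c(q,q'):=\inf\{\|x-y\|^s:x\in q,y\in q'\}$, and for $\gamma,\gamma'\in\mathcal D(Q)$ (probability distributions on $Q$), $\mathcal T_c(\gamma,\gamma'):=\min_{\nu}\sum_{q,q'\in Q}c(q,q')\nu(q,q')$, the minimum over couplings $\nu$ of $\gamma$ and $\gamma'$. *)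

(* Defs.v *)
From HB Require Import structures.
From mathcomp Require Import all_boot all_order all_algebra.
From mathcomp Require Import all_classical all_reals all_analysis.
Import Order.TTheory GRing.Theory Num.Theory.
Import numFieldNormedType.Exports.
Local Open Scope classical_set_scope.
Local Open Scope ring_scope.

Set Implicit Arguments. Unset Strict Implicit. Unset Printing Implicit Defensive.

(* R^n, as row vectors, equipped with its Borel sigma-algebra: the
   sigma-algebra generated by the open sets of the (product = Euclidean)
   topology of 'rV[R]_n. *)
Notation Rn R n := (g_sigma_algebraType (@open 'rV[R]_n)).

Definition enorm (R : realType) (n : nat) (x : 'rV[R]_n) : R :=
  Num.sqrt (\sum_(i < n) (x ord0 i) ^+ 2).

Definition is_coupling (R : realType) (n : nat)
  (p p' : probability (Rn R n) R)
  (pi : probability (Rn R n * Rn R n)%type R) : Prop :=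
  (forall A : set (Rn R n), measurable A -> pi (A `*` setT) = p A) /\
  (forall B : set (Rn R n), measurable B -> pi (setT `*` B) = p' B).

Definition finite_moment (R : realType) (n : nat) (s : R)
  (p : probability (Rn R n) R) : Prop :=
  (\int[p]_x ((enorm (x : 'rV[R]_n)) `^ s)%:E < +oo)%E.

Definition Wasserstein (R : realType) (n : nat) (s : R)
  (p p' : probability (Rn R n) R) : \bar R :=
  poweR (ereal_inf [set (\int[pi]_z
            ((enorm ((z.1 : 'rV[R]_n) - (z.2 : 'rV[R]_n))) `^ s)%:E)%E
          | pi in [set pi | is_coupling p p' pi]]) s^-1.

Definition is_finite_Borel_partition (R : realType) (n k : nat)
  (Q : 'I_k -> set (Rn R n)) : Prop :=
  [/\ (forall i, measurable (Q i)),
      (forall i, Q i !=set0),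
      (forall i j, i != j -> Q i `&` Q j = set0) &
      \bigcup_i Q i = setT].

Definition cell_cost (R : realType) (n : nat) (s : R)
  (q q' : set (Rn R n)) : R :=
  inf [set (enorm ((x : 'rV[R]_n) - (y : 'rV[R]_n))) `^ s
      | x in q & y in q'].

Definition is_disc_coupling (R : realType) (k : nat)
  (g g' : 'I_k -> R) (nu : 'I_k -> 'I_k -> R) : Prop :=
  [/\ (forall i j, 0 <= nu i j),
      (forall i, \sum_(j < k) nu i j = g i) &
      (forall j, \sum_(i < k) nu i j = g' j)].

(* T_c(gamma, gamma') = min over couplings nu of sum c(q,q') nu(q,q')
   (the minimum is attained, so it equals the infimum) *)
Definition Tc (R : realType) (k : nat) (c : 'I_k -> 'I_k -> R)
  (g g' : 'I_k -> R) : R :=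
  inf [set \sum_(i < k) \sum_(j < k) c i j * nu i j
      | nu in [set nu | is_disc_coupling g g' nu]].

Definition cell_distr (R : realType) (n k : nat) (Q : 'I_k -> set (Rn R n))
  (p : probability (Rn R n) R) : 'I_k -> R :=
  fun i => fine (p (Q i)).

(* Main.v *)
Require Import Defs.
From HB Require Import structures.
From mathcomp Require Import all_boot all_order all_algebra.
From mathcomp Require Import all_classical all_reals all_analysis.
From mathcomp Require Import measurable_realfun.
Import Order.TTheory GRing.Theory Num.Theory.
Import numFieldNormedType.Exports.
Local Open Scope classical_set_scope.
Local Open Scope ring_scope.

Section key.
Context d1 d2 (T1 : measurableType d1) (T2 : measurableType d2) (R : realType).
Variable (pi : {measure set (T1 * T2)%type -> \bar R}).
Variable (k : nat) (Q1 : 'I_k -> set T1) (Q2 : 'I_k -> set T2).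
Hypothesis mQ1 : forall i, measurable (Q1 i).
Hypothesis mQ2 : forall i, measurable (Q2 i).

Import HBNNSimple.

Lemma big_add_nnsfunE (F : 'I_k -> {nnsfun (T1 * T2)%type >-> R}) t :
  (\big[add_nnsfun/nnsfun0]_(i < k) F i) t = \sum_(i < k) F i t.
Proof. by elim/big_ind2 : _ => [|x g y h <- <-|]. Qed.

Lemma key_le (c : 'I_k -> 'I_k -> R) (f : T1 * T2 -> \bar R)
  (c0 : forall i j, 0 <= c i j) (f0 : forall z, (0 <= f z)%E)
  (cf : forall i j z, Q1 i z.1 -> Q2 j z.2 -> ((c i j)%:E <= f z)%E)
  (dis1 : forall i j x, Q1 i x -> Q1 j x -> i = j)
  (dis2 : forall i j x, Q2 i x -> Q2 j x -> i = j) :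
  (\sum_(i < k) \sum_(j < k) (c i j)%:E * pi (Q1 i `*` Q2 j) <= \int[pi]_z f z)%E.
Proof.
have mQQ i j : measurable (Q1 i `*` Q2 j) by exact: measurableX.
pose h := \big[add_nnsfun/nnsfun0]_(i < k) \big[add_nnsfun/nnsfun0]_(j < k)
   scale_nnsfun (indic_nnsfun R (mQQ i j)) (c0 i j).
have hE t : h t = \sum_(i < k) \sum_(j < k) c i j * \1_(Q1 i `*` Q2 j) t.
  rewrite big_add_nnsfunE; apply: eq_bigr => i _.
  by rewrite big_add_nnsfunE; apply: eq_bigr => j _.
have -> : (\sum_(i < k) \sum_(j < k) (c i j)%:E * pi (Q1 i `*` Q2 j) =
    \int[pi]_z (h z)%:E)%E.
  transitivity (\int[pi]_z (\sum_(i < k) \sum_(j < k)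
      ((c i j)%:E * (\1_(Q1 i `*` Q2 j) z)%:E)))%E; last first.
    apply: eq_integral => z _; rewrite hE -sumEFin; apply: eq_bigr => i _.
    by rewrite -sumEFin; apply: eq_bigr => j _; rewrite EFinM.
  have mI i j : measurable_fun [set: T1 * T2] (fun z => ((c i j)%:E * (\1_(Q1 i `*` Q2 j) z)%:E : \bar R)%E).
    apply: emeasurable_funM => //; apply/measurable_EFinP; exact: measurable_indic.
  have I0 i j z : (0 <= (c i j)%:E * (\1_(Q1 i `*` Q2 j) z)%:E)%E.
    by apply: mule_ge0; rewrite lee_fin.
  rewrite ge0_integral_sum //; last first.
    - by move=> i z _; apply: sume_ge0 => j _; exact: I0.
    - by move=> i; apply: emeasurable_sum => j; exact: mI.
  apply: eq_bigr => i _; rewrite ge0_integral_sum //; apply: eq_bigr => j _.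
  rewrite ge0_integralZl_EFin //; first by rewrite integral_indic // setIT.
  by apply/measurable_EFinP; exact: measurable_indic.
rewrite integralT_nnsfun ge0_integralTE //.
apply: ereal_sup_ubound; exists h => // t.
rewrite hE.
case: (pselect (exists i, Q1 i t.1)) => [[i0 Hi0]|N1]; last first.
  rewrite big1 ?f0 // => i _; rewrite big1 // => j _.
  by rewrite indicE memNset ?mulr0 // => -[H _]; apply: N1; exists i.
case: (pselect (exists j, Q2 j t.2)) => [[j0 Hj0]|N2]; last first.
  rewrite big1 ?f0 // => i _; rewrite big1 // => j _.
  by rewrite indicE memNset ?mulr0 // => -[_ H]; apply: N2; exists j.
rewrite (bigD1 i0) //= [X in (_ + X)%R]big1 ?addr0; last first.
  move=> i /eqP ne; rewrite big1 // => j _.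
  by rewrite indicE memNset ?mulr0 // => -[H _]; apply: ne; exact: dis1 H Hi0.
rewrite (bigD1 j0) //= [X in (_ + X)%R]big1 ?addr0; last first.
  move=> j /eqP ne.
  by rewrite indicE memNset ?mulr0 // => -[_ H]; apply: ne; exact: dis2 H Hj0.
rewrite indicE mem_set ?mulr1; last by split.
exact: cf.
Qed.
End key.

Section marg.
Context d (T : measurableType d) (R : realType).
Variable (pi : {measure set T -> \bar R}).

Lemma sum_measure_part (k : nat) (S : set T) (g : 'I_k -> set T) :
  measurable S -> (forall j, measurable (g j)) ->
  (forall z, \1_S z = \sum_(j < k) \1_(g j) z :> R) ->
  (\sum_(j < k) pi (g j) = pi S)%E.
Proof.
move=> mS mg H.
have := integral_indic pi measurableT mS; rewrite setIT => <-.
under eq_integral do rewrite H -sumEFin.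
rewrite ge0_integral_sum //.
- by apply: eq_bigr => j _; rewrite integral_indic // setIT.
- by move=> j; apply/measurable_EFinP; exact: measurable_indic.

Qed.
End marg.

Section part.
Context d1 d2 (T1 : measurableType d1) (T2 : measurableType d2) (R : realType).
Variable (k : nat) (Q : 'I_k -> set T2).
Hypothesis cov : forall x, exists i, Q i x.
Hypothesis dis : forall i j x, Q i x -> Q j x -> i = j.

Lemma indic_part1 (A : set T1) (z : T1 * T2) :
  \1_(A `*` setT) z = \sum_(j < k) \1_(A `*` Q j) z :> R.
Proof.
have [j0 Hj0] := cov z.2.
rewrite (bigD1 j0) //= big1 ?addr0; last first.
  move=> j /eqP ne; rewrite indicE memNset // => -[_ H]; apply: ne.
  exact: dis H Hj0.
rewrite !indicE; case: (pselect (A z.1)) => Az.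
  by rewrite !mem_set.
by rewrite !memNset // => -[].
Qed.
End part.

Section part2.
Context d1 d2 (T1 : measurableType d1) (T2 : measurableType d2) (R : realType).
Variable (k : nat) (Q : 'I_k -> set T1).
Hypothesis cov : forall x, exists i, Q i x.
Hypothesis dis : forall i j x, Q i x -> Q j x -> i = j.

Lemma indic_part2 (B : set T2) (z : T1 * T2) :
  \1_(setT `*` B) z = \sum_(j < k) \1_(Q j `*` B) z :> R.
Proof.
have [j0 Hj0] := cov z.1.
rewrite (bigD1 j0) //= big1 ?addr0; last first.
  move=> j /eqP ne; rewrite indicE memNset // => -[H _]; apply: ne.
  exact: dis H Hj0.
rewrite !indicE; case: (pselect (B z.2)) => Bz.
  by rewrite !mem_set.
by rewrite !memNset // => -[].
Qed.
End part2.

Theorem lemma2 (R : realType) (n : nat) (s eps : R)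
  (p p' : probability (Rn R n) R) (k : nat) (Q : 'I_k -> set (Rn R n)) :
  1 <= s -> 0 <= eps ->
  finite_moment s p -> finite_moment s p' ->
  is_finite_Borel_partition Q ->
  (Wasserstein s p p' <= eps%:E)%E ->
  Tc (fun i j => cell_cost s (Q i) (Q j)) (cell_distr Q p) (cell_distr Q p')
    <= eps `^ s.
Proof.
move=> s1 eps0 _ _ [mQ Qn0 Qdis QT] W.
have s0 : 0 < s by apply: lt_le_trans s1.
have dis i j x : Q i x -> Q j x -> i = j.
  move=> Hi Hj; case: (eqVneq i j) => // /Qdis E.
  by have : (Q i `&` Q j) x by []; rewrite E.
have cov x : exists i, Q i x.
  by have : [set: Rn R n] x by []; rewrite -QT => -[i _ Hi]; exists i.
have c0 i j : 0 <= cell_cost s (Q i) (Q j).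
  apply: lb_le_inf.
    have [x Hx] := Qn0 i; have [y Hy] := Qn0 j.
    by eexists; exists x => //; exists y.
  by move=> _ [x _ [y _ <-]]; exact: powR_ge0.
have cle i j x y : Q i x -> Q j y ->
    cell_cost s (Q i) (Q j) <= (enorm ((x : 'rV[R]_n) - (y : 'rV[R]_n))) `^ s.
  move=> Hx Hy; apply: ge_inf.
    by exists 0 => _ [x' _ [y' _ <-]]; exact: powR_ge0.
  by exists x => //; exists y.
apply/ler_addgt0Pr => e e0.
have [pi cpl Hint] : exists2 pi : probability (Rn R n * Rn R n)%type R,
    is_coupling p p' pi &
    (\int[pi]_z ((enorm ((z.1 : 'rV[R]_n) - (z.2 : 'rV[R]_n))) `^ s)%:E
      <= ((eps `^ s) + e)%:E)%E.
  rewrite /Wasserstein in W.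
  set S := [set _ | _ in _] in W.
  have I0 : (0 <= ereal_inf S)%E.
    apply/ereal_infP => _ [pi _ <-]; apply: integral_ge0 => z _.
    by rewrite lee_fin powR_ge0.
  have Ile : (ereal_inf S <= (eps `^ s)%:E)%E.
    move: W I0; case: (ereal_inf S) => [r| |] //=.
    - rewrite lee_fin => W r0.
      have -> : r = (r `^ s^-1) `^ s.
        by rewrite -powRrM mulVf ?gt_eqF // powRr1.
      by apply: ge0_ler_powR => //; [exact: ltW | rewrite nnegrE powR_ge0].
    - by rewrite invr_eq0 gt_eqF.
  have : (ereal_inf S < ((eps `^ s) + e)%:E)%E.
    by apply: (le_lt_trans Ile); rewrite lte_fin ltrDl.
  move=> /ereal_inf_lt [_ [pi cpl <-] H].
  by exists pi => //; exact: ltW.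
pose nu i j := fine (pi (Q i `*` Q j)).
have fin A : measurable A -> pi A \is a fin_num by move=> mA; exact: fin_num_measure.
have Hnu : is_disc_coupling (cell_distr Q p) (cell_distr Q p') nu.
  split.
  - by move=> i j; apply: fine_ge0; exact: measure_ge0.
  - move=> i; rewrite /nu sum_fine; last by move=> j _; apply: fin; exact: measurableX.
    rewrite (@sum_measure_part _ _ _ pi _ (Q i `*` setT)) //.
    + by rewrite /cell_distr; congr fine; exact: cpl.1.
    + exact: measurableX.
    + by move=> j; exact: measurableX.
    + exact: indic_part1.
  - move=> j; rewrite /nu sum_fine; last by move=> i _; apply: fin; exact: measurableX.
    rewrite (@sum_measure_part _ _ _ pi _ (setT `*` Q j)) //.
    + by rewrite /cell_distr; congr fine; exact: cpl.2.
    + exact: measurableX.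
    + by move=> i; exact: measurableX.
    + exact: indic_part2.
have le : Tc (fun i j => cell_cost s (Q i) (Q j)) (cell_distr Q p) (cell_distr Q p')
    <= \sum_(i < k) \sum_(j < k) cell_cost s (Q i) (Q j) * nu i j.
  apply: ge_inf; last by exists nu.
  exists 0 => _ [nu' [H0 _ _] <-].
  by apply: sumr_ge0 => i _; apply: sumr_ge0 => j _; apply: mulr_ge0.
apply: (le_trans le); rewrite -lee_fin; apply: le_trans Hint.
rewrite -sumEFin.
have -> : (\sum_(i < k) (\sum_(j < k) cell_cost s (Q i) (Q j) * nu i j)%:E =
   \sum_(i < k) \sum_(j < k) (cell_cost s (Q i) (Q j))%:E * pi (Q i `*` Q j))%E.
  apply: eq_bigr => i _; rewrite -sumEFin; apply: eq_bigr => j _.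
  by rewrite EFinM /nu fineK //; apply: fin; exact: measurableX.
apply: key_le => //.
- by move=> z; rewrite lee_fin powR_ge0.
- by move=> i j z Hi Hj; rewrite lee_fin; exact: cle.
Qed.
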